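(* Let $E$ be a Banach space, $Y$ a Banach lattice, $1\le q\le p\le\infty$ and $T:E\to Y$ a bounded linear operator. Then $T$ is positive strongly $(p,q)$-summing if and only if there exists $C>0$ such that for all $n\in\mathbb{N}$ and all $x_1,\dots,x_n\in E$, $$\|(T(x_i))_{i=1}^n\|_{\ell_p^{\pi}(Y)}\le C\|(x_i)_{i=1}^n\|_{q}.$$
   Context: $\|(x_i)_{i=1}^n\|_q=(\sum_i\|x_i\|^q)^{1/q}$ (sup norm if $q=\infty$); $p^{\ast}$ is the conjugate exponent of $p$. For a sequence $(y_i^{\ast})$ in $Y^{\ast}$, $\|(y_i^{\ast})\|_{p^{\ast},\omega}=\sup_{y\in B_{Y}}\|(\langle y_i^{\ast},y\rangle)_i\|_{p^{\ast}}$. For a Banach lattice $Y$, $\ell_{r,|\omega|}(Y^{\ast})$ is the Banach lattice of sequences $(y_n^{\ast})$ in $Y^{\ast}$ with $\|(y_n^{\ast})\|_{r,|\omega|}=\sup_{y\in B_Y\cap Y_+}\|(\langle|y_n^{\ast}|,y\rangle)_n\|_{r}<\infty$. For $1<p\le\infty$, $\ell_p^{\pi}(Y)$ is the space of sequences $(y_n)$ in $Y$ with $\|(y_n)\|_{\ell_p^{\pi}(Y)}=\sup\sum_n\langle y_n^{\ast},|y_n|\rangle<\infty$, the supremum over positive $(y_n^{\ast})$ in the unit ball of $\ell_{p^{\ast},|\omega|}(Y^{\ast})$ (finite sequences padded with zeros); by convention $\ell_1^{\pi}(Y)=\ell_1(Y)$. An operator $T:E\to Y$ is positive strongly $(p,q)$-summing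 if there is $C>0$ such that $\sum_{i=1}^n|\langle T(x_i),y_i^{\ast}\rangle|\le C\|(x_i)_{i=1}^n\|_q\,\|(y_i^{\ast})_{i=1}^n\|_{p^{\ast},\omega}$ for all $n$, all $x_i\in E$ and all positive $y_i^{\ast}\in Y^{\ast}$. *)

(* Defs.v *)
From HB Require Import structures.
From mathcomp Require Import all_boot all_order all_algebra.
From mathcomp Require Import all_classical all_reals all_analysis.
Set Implicit Arguments. Unset Strict Implicit. Unset Printing Implicit Defensive.
Import Order.TTheory GRing.Theory Num.Theory.
Import numFieldNormedType.Exports.
Local Open Scope classical_set_scope.
Local Open Scope ring_scope.

Record BanachLattice (R : realType) (Y : completeNormedModType R) := {
  bl_le : Y -> Y -> Prop;
  bl_join : Y -> Y -> Y;
  bl_refl : forall x, bl_le x x;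
  bl_antisym : forall x y, bl_le x y -> bl_le y x -> x = y;
  bl_trans : forall x y z, bl_le x y -> bl_le y z -> bl_le x z;
  bl_add : forall x y z, bl_le x y -> bl_le (x + z) (y + z);
  bl_scale : forall (a : R) x y, 0 <= a -> bl_le x y -> bl_le (a *: x) (a *: y);
  bl_join_ubl : forall x y, bl_le x (bl_join x y);
  bl_join_ubr : forall x y, bl_le y (bl_join x y);
  bl_join_least : forall x y z, bl_le x z -> bl_le y z -> bl_le (bl_join x y) z;
  bl_norm : forall x y, bl_le (bl_join x (- x)) (bl_join y (- y)) -> `|x| <= `|y|
}.

Section Defs.
Variable R : realType.

Definition labs (Y : completeNormedModType R) (L : BanachLattice Y) (y : Y) : Y :=
  bl_join L y (- y).

Definition conj_exp (p : \bar R) : \bar R :=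
  match p with
  | +oo%E => 1%E
  | r%:E => if r == 1 then +oo%E else (r / (r - 1))%:E
  | -oo%E => -oo%E
  end.

Definition lpnorm (r : \bar R) (n : nat) (a : 'I_n -> R) : R :=
  match r with
  | +oo%E => \big[Num.max/0]_(i < n) `|a i|
  | s%:E => powR (\sum_(i < n) powR `|a i| s) (s^-1)
  | -oo%E => 0
  end.

Definition is_dual (X : normedModType R) (f : X -> R) : Prop :=
  (forall (a : R) (x y : X), f (a *: x + y) = a * f x + f y) /\
  exists M : R, forall x, `|f x| <= M * `|x|.

Definition is_bounded_op (E Y : normedModType R) (T : E -> Y) : Prop :=
  (forall (a : R) (x y : E), T (a *: x + y) = a *: T x + T y) /\
  exists M : R, forall x, `|T x| <= M * `|x|.

Definition positive_fun (Y : completeNormedModType R) (L : BanachLattice Y)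
  (f : Y -> R) : Prop := forall y, bl_le L 0 y -> 0 <= f y.

(* modulus |f| of f in the dual lattice Y^*, on the positive cone
   (Riesz-Kantorovich): <|f|, y> = sup { |<f, z>| : |z| <= y }, y >= 0 *)
Definition dual_abs (Y : completeNormedModType R) (L : BanachLattice Y)
  (f : Y -> R) (y : Y) : R :=
  sup [set `|f z| | z in [set z | bl_le L (labs L z) y]].

Definition weak_norm (Y : normedModType R) (r : \bar R) (n : nat)
  (f : 'I_n -> Y -> R) : R :=
  sup [set lpnorm r (fun i => f i y) | y in [set y : Y | `|y| <= 1]].

Definition absweak_norm (Y : completeNormedModType R) (L : BanachLattice Y)
  (r : \bar R) (n : nat) (f : 'I_n -> Y -> R) : R :=
  sup [set lpnorm r (fun i => dual_abs L (f i) y)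
      | y in [set y : Y | `|y| <= 1 /\ bl_le L 0 y]].

(* ||(y_i)_{i<n}||_{l_p^pi(Y)} (finite sequences padded with zeros);
   l_1^pi(Y) = l_1(Y) by convention *)
Definition lpi_norm (Y : completeNormedModType R) (L : BanachLattice Y)
  (p : \bar R) (n : nat) (y : 'I_n -> Y) : R :=
  if p == 1%E then \sum_(i < n) `|y i|
  else sup [set \sum_(i < n) f i (labs L (y i)) |
            f in [set f : 'I_n -> Y -> R |
                  (forall i, is_dual (f i) /\ positive_fun L (f i)) /\
                  absweak_norm L (conj_exp p) f <= 1]].

Definition pos_strongly_summing (E : normedModType R)
  (Y : completeNormedModType R) (L : BanachLattice Y) (p q : \bar R)
  (T : E -> Y) : Prop :=
  exists C : R, 0 < C /\
    forall (n : nat) (x : 'I_n -> E) (f : 'I_n -> Y -> R),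
      (forall i, is_dual (f i) /\ positive_fun L (f i)) ->
      \sum_(i < n) `|f i (T (x i))|
        <= C * lpnorm q (fun i => `|x i|) * weak_norm (conj_exp p) f.

End Defs.

(* Main.v *)
Require Import Defs.
From HB Require Import structures.
From mathcomp Require Import all_boot all_order all_algebra.
From mathcomp Require Import all_classical all_reals all_analysis.
From mathcomp Require Import ring lra.
Set Implicit Arguments. Unset Strict Implicit. Unset Printing Implicit Defensive.
Import Order.TTheory GRing.Theory Num.Theory.
Import numFieldNormedType.Exports.
Local Open Scope classical_set_scope.
Local Open Scope ring_scope.

Section HBsec.
Context (R : realType) (V : lmodType R).

Definition subl (q : V -> R) :=
  (forall u v, q (u + v) <= q u + q v) /\
  (forall (a : R) u, 0 <= a -> q (a *: u) <= a * q u).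

Lemma subl_0 q : subl q -> q 0 = 0.
Proof.
move=> [sa sh]; apply/le_anti/andP; split.
  by have := sh 0 0 (lexx _); rewrite scale0r mul0r.
by have := sa 0 0; rewrite addr0 -subr_ge0 -addrA subrr addr0.
Qed.

Lemma subl_lb q u : subl q -> - q (- u) <= q u.
Proof.
move=> hq; have := hq.1 u (- u); rewrite subrr subl_0 //; lra.
Qed.

Lemma subl_homo_ge q t z : subl q -> 0 <= t -> t * q z <= q (t *: z).
Proof.
move=> hq; rewrite le_eqVlt => /orP[/eqP<-|t0].
  by rewrite mul0r scale0r subl_0.
have ti : 0 < t^-1 by rewrite invr_gt0.
have := hq.2 t^-1 (t *: z) (ltW ti).
rewrite scalerA mulVf ?gt_eqF // scale1r => h.
by rewrite -(ler_pM2l ti) mulrA mulVf ?gt_eqF // mul1r.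
Qed.

Definition ext (q : V -> R) (z : V) (u : V) : R :=
  inf [set q (u + t *: z) - t * q z | t in [set t : R | 0 <= t]].

Lemma ext_lbound q z u : subl q -> has_lbound
  [set q (u + t *: z) - t * q z | t in [set t : R | 0 <= t]].
Proof.
move=> hq; exists (- q (- u)) => _ [t t0 <-].
have h1 := subl_homo_ge z hq t0.
have h2 := hq.1 (u + t *: z) (- u).
rewrite addrC addKr in h2.
lra.
Qed.

Lemma ext_le q z u t : subl q -> 0 <= t -> ext q z u <= q (u + t *: z) - t * q z.
Proof.
move=> hq t0; apply: (ge_inf (ext_lbound z u hq)); by exists t.
Qed.

Lemma ext_ge q z u x : (forall t, 0 <= t -> x <= q (u + t *: z) - t * q z) ->
  x <= ext q z u.
Proof.
move=> h; apply: lb_le_inf; first by exists (q (u + 0 *: z) - 0 * q z); exists 0 => //=.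
by move=> _ [t t0 <-]; apply: h.
Qed.

Lemma ext_subl q z : subl q -> subl (ext q z).
Proof.
move=> hq; split.
  move=> u v.
  have key : forall s t, 0 <= s -> 0 <= t ->
    ext q z (u + v) <= (q (u + s *: z) - s * q z) + (q (v + t *: z) - t * q z).
    move=> s t s0 t0; apply: le_trans (ext_le z (u + v) hq (addr_ge0 s0 t0)) _.
    have := hq.1 (u + s *: z) (v + t *: z).
    have -> : u + s *: z + (v + t *: z) = u + v + (s + t) *: z.
      by rewrite scalerDl; rewrite addrACA.
    by move=> h; rewrite mulrDl; lra.
  rewrite -lerBlDr; apply: (@ext_ge q z u) => s s0.
  suff : ext q z (u+v) - (q (u + s *: z) - s * q z) <= ext q z v by lra.
  apply: (@ext_ge q z v) => t t0.
  have := key s t s0 t0; lra.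
move=> a u; rewrite le_eqVlt => /orP[/eqP<-|a0].
  rewrite scale0r mul0r; apply: le_trans (ext_le z 0 hq (lexx 0)) _.
  by rewrite scale0r addr0 mul0r subr0 subl_0.
rewrite mulrC -ler_pdivrMr //; apply: ext_ge => t t0.
rewrite ler_pdivrMr // mulrC.
apply: le_trans (ext_le z (a *: u) hq (mulr_ge0 (ltW a0) t0)) _.
rewrite -scalerA -scalerDr mulrBr mulrA.
by rewrite lerD2r; apply: hq.2; apply: ltW.
Qed.

Lemma ext_le_q q z u : subl q -> ext q z u <= q u.
Proof.
by move=> hq; apply: le_trans (ext_le z u hq (lexx 0)) _; rewrite scale0r addr0 mul0r subr0.
Qed.

Lemma ext_add q z u : subl q -> ext q z u + q z <= q (u + z).
Proof.
move=> hq; have := ext_le z u hq ler01; rewrite scale1r mul1r; lra.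
Qed.

Lemma hahn (rho : V -> R) (y : V) : subl rho -> exists (g : V -> R),
  (forall (a : R) u v, g (a *: u + v) = a * g u + g v) /\
  (forall u, g u <= rho u) /\ rho y <= g y.
Proof.
move=> hrho.
pose q0 := ext rho y.
have hq0 : subl q0 := ext_subl y hrho.
pose T := {q : V -> R | subl q /\ (forall u, q u <= q0 u)}.
pose t0 : T := exist _ q0 (conj hq0 (fun u => lexx _)).
pose Rr (s t : T) : bool := `[< forall u, sval t u <= sval s u >].
have [|||m mmax] := @ZL_preorder T t0 Rr.
- by move=> t; apply/asboolP => u; exact: lexx.
- move=> r s t /asboolP h1 /asboolP h2; apply/asboolP => u.
  exact: le_trans (h2 u) (h1 u).
- move=> A Atot.
  case: (pselect (exists s, A s)) => [[s0 As0]|nA]; last first.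
    by exists t0 => s As; exfalso; apply: nA; exists s.
  pose qi u := inf [set sval s u | s in A].
  have hlb u : has_lbound [set sval s u | s in A].
    exists (- q0 (- u)) => _ [s As <-].
    case: s {As} => q [hq hb] /=.
    apply: le_trans (subl_lb u hq); rewrite lerN2; exact: hb.
  have hle s u : A s -> qi u <= sval s u.
    by move=> As; apply: (ge_inf (hlb u)); exists s.
  have hge u x : (forall s, A s -> x <= sval s u) -> x <= qi u.
    move=> h; apply: lb_le_inf; first by exists (sval s0 u); exists s0.
    by move=> _ [s As <-]; apply: h.
  have hqi : subl qi.
    split.
      move=> u v; rewrite -lerBlDr; apply: (hge u) => s As.
      suff : qi (u + v) - sval s u <= qi v by lra.
      apply: (hge v) => t At.
      have hs := (proj1 (svalP s)).1; have ht := (proj1 (svalP t)).1.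
      have [/asboolP h|/asboolP h] := Atot s t As At.
        have := hle t (u + v) At; have := ht u v; have := h u; lra.
      have := hle s (u + v) As; have := hs u v; have := h v; lra.
    move=> a u; rewrite le_eqVlt => /orP[/eqP<-|a0].
      rewrite scale0r mul0r; apply: le_trans (hle s0 0 As0) _.
      by rewrite subl_0 //; exact: (proj1 (svalP s0)).
    rewrite mulrC -ler_pdivrMr //; apply: (hge u) => s As.
    rewrite ler_pdivrMr // mulrC.
    apply: le_trans (hle s (a *: u) As) _.
    by apply: (proj1 (svalP s)).2; exact: ltW.
  have hqb u : qi u <= q0 u.
    exact: le_trans (hle s0 u As0) ((proj2 (svalP s0)) u).
  exists (exist _ qi (conj hqi hqb)) => s As; apply/asboolP => u /=.
  exact: hle.
have [hg hgb] := svalP m.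
set g := sval m in hg hgb mmax.
have gadd u z : g (u + z) = g u + g z.
  apply/le_anti/andP; split; first exact: hg.1.
  have hez : subl (ext g z) := ext_subl z hg.
  have hezb u' : ext g z u' <= q0 u'.
    exact: le_trans (ext_le_q z u' hg) (hgb u').
  have := mmax (exist _ (ext g z) (conj hez hezb)).
  have h1 : Rr m (exist _ (ext g z) (conj hez hezb)).
    by apply/asboolP => u' /=; exact: ext_le_q.
  move=> /(_ h1) /asboolP /= h2.
  have h3 : g u <= ext g z u := h2 u.
  have := ext_add z u hg; lra.
have g0 : g 0 = 0 := subl_0 hg.
have gN u : g (- u) = - g u.
  by have := gadd u (- u); rewrite subrr g0; lra.
have gZ a u : g (a *: u) = a * g u.
  have gZp b w : 0 <= b -> g (b *: w) = b * g w.
    move=> b0; apply/le_anti/andP; split; first exact: hg.2.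
    exact: subl_homo_ge.
  have [a0|a0] := leP 0 a; first exact: gZp.
  have -> : a *: u = - ((- a) *: u) by rewrite scaleNr opprK.
  by rewrite gN gZp ?oppr_ge0 ?ltW // mulNr opprK.
exists g; split; first by move=> a u v; rewrite gadd gZ.
split; first by move=> u; exact: le_trans (hgb u) (ext_le_q y u hrho).
have := hgb (- y); rewrite /q0.
have := ext_le y (- y) hrho ler01.
rewrite scale1r mul1r addNr subl_0 // gN; lra.
Qed.

End HBsec.

Section Lat.
Context (R : realType) (Y : completeNormedModType R) (L : BanachLattice Y).
Local Notation le := (bl_le L).
Local Notation lab := (labs L).
Definition lpos (x : Y) := bl_join L x 0.

Lemma le_add2 x y u v : le x y -> le u v -> le (x + u) (y + v).
Proof.
move=> h1 h2; apply: bl_trans (bl_add u h1) _.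
rewrite (addrC y u) (addrC y v); exact: bl_add.
Qed.

Lemma le_opp x y : le x y -> le (- y) (- x).
Proof.
move=> h; have := bl_add (- x - y) h.
by rewrite addrA subrr add0r addrCA subrr addr0.
Qed.

Lemma le_subr x y : le x y -> le 0 (y - x).
Proof. by move=> h; have := bl_add (- x) h; rewrite subrr. Qed.

Lemma le_subl x y : le 0 (y - x) -> le x y.
Proof. by move=> h; have := bl_add x h; rewrite add0r subrK. Qed.

Lemma le_scale0 (a : R) x : 0 <= a -> le 0 x -> le 0 (a *: x).
Proof. by move=> a0 h; have := bl_scale a0 h; rewrite scaler0. Qed.

Lemma lab_ge x : le x (lab x). Proof. exact: bl_join_ubl. Qed.
Lemma lab_geN x : le (- x) (lab x). Proof. exact: bl_join_ubr. Qed.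

Lemma lab_ge0 x : le 0 (lab x).
Proof.
have := le_add2 (lab_ge x) (lab_geN x); rewrite subrr => h.
have h2 : 0 <= (2 : R)^-1 by rewrite invr_ge0.
have hc : (2 : R)^-1 + 2^-1 = 1 by field.
have := bl_scale h2 h; rewrite scaler0 scalerDr -scalerDl hc scale1r.
exact.
Qed.

Lemma lab_id x : le 0 x -> lab x = x.
Proof.
move=> h; apply: bl_antisym; last exact: lab_ge.
apply: bl_join_least; first exact: bl_refl.
have h' := le_opp h; rewrite oppr0 in h'; exact: (bl_trans h' h).
Qed.

Lemma norm_lab x : `|lab x| = `|x|.
Proof.
apply/le_anti/andP; split; apply: (@bl_norm _ _ L).
all: rewrite (_ : bl_join L (lab x) (- lab x) = lab x); last exact: lab_id (lab_ge0 x).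
all: exact: bl_refl.
Qed.

Lemma lpos_ge0 x : le 0 (lpos x). Proof. exact: bl_join_ubr. Qed.
Lemma lpos_ge x : le x (lpos x). Proof. exact: bl_join_ubl. Qed.

Lemma lpos_id x : le 0 x -> lpos x = x.
Proof.
move=> h; apply: bl_antisym; last exact: lpos_ge.
by apply: bl_join_least => //; exact: bl_refl.
Qed.

Lemma lpos_N0 x : le 0 x -> lpos (- x) = 0.
Proof.
move=> h; apply: bl_antisym; last exact: lpos_ge0.
apply: bl_join_least; last exact: bl_refl.
by have := le_opp h; rewrite oppr0.
Qed.

Lemma lpos_le_lab x : le (lpos x) (lab x).
Proof. apply: bl_join_least; [exact: lab_ge | exact: lab_ge0]. Qed.

Lemma norm_lpos x : `|lpos x| <= `|x|.
Proof.
apply: (@bl_norm _ _ L).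
rewrite (_ : bl_join L (lpos x) (- lpos x) = lpos x); last exact: lab_id (lpos_ge0 x).
exact: lpos_le_lab.
Qed.

Lemma lab_le_lpos x : le (lab x) (lpos x + lpos (- x)).
Proof.
apply: bl_join_least.
  by have := le_add2 (lpos_ge x) (lpos_ge0 (- x)); rewrite addr0.
by have := le_add2 (lpos_ge0 x) (lpos_ge (- x)); rewrite add0r.
Qed.

Lemma lpos_add u v : le (lpos (u + v)) (lpos u + lpos v).
Proof.
apply: bl_join_least; first exact: le_add2 (lpos_ge u) (lpos_ge v).
by have := le_add2 (lpos_ge0 u) (lpos_ge0 v); rewrite addr0.
Qed.

Lemma lpos_scale (a : R) u : 0 <= a -> le (lpos (a *: u)) (a *: lpos u).
Proof.
move=> a0; apply: bl_join_least; first exact: bl_scale a0 (lpos_ge u).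
exact: le_scale0 a0 (lpos_ge0 u).
Qed.

Definition linf (f : Y -> R) := forall (a : R) x y, f (a *: x + y) = a * f x + f y.

Lemma linf0 f : linf f -> f 0 = 0.
Proof. by move=> h; have := h 1 0 0; rewrite scale1r addr0 mul1r; lra. Qed.
Lemma linfD f x y : linf f -> f (x + y) = f x + f y.
Proof. by move=> h; have := h 1 x y; rewrite scale1r mul1r. Qed.
Lemma linfZ f a x : linf f -> f (a *: x) = a * f x.
Proof. by move=> h; have := h a x 0; rewrite addr0 (linf0 h) addr0. Qed.
Lemma linfN f x : linf f -> f (- x) = - f x.
Proof. by move=> h; rewrite -scaleN1r linfZ // mulN1r. Qed.
Lemma linfB f x y : linf f -> f (x - y) = f x - f y.
Proof. by move=> h; rewrite linfD // linfN. Qed.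

Lemma posf_mono f x y : linf f -> positive_fun L f -> le x y -> f x <= f y.
Proof.
move=> hl hp h; have := hp _ (le_subr h); rewrite linfB //; lra.
Qed.

Lemma posf_abs f y : linf f -> positive_fun L f -> `|f y| <= f (lab y).
Proof.
move=> hl hp; rewrite ler_norml; apply/andP; split.
  by rewrite lerNl -linfN //; apply: posf_mono => //; exact: lab_geN.
by apply: posf_mono => //; exact: lab_ge.
Qed.

Lemma dual_lin (f : Y -> R) : is_dual f -> linf f.
Proof. by case. Qed.

Lemma dual_bound (f : Y -> R) : is_dual f -> exists M, 0 <= M /\ forall x, `|f x| <= M * `|x|.
Proof.
case=> _ [M hM]; exists `|M|; split => // x.
apply: le_trans (hM x) _; apply: ler_wpM2r => //; exact: ler_norm.
Qed.

Lemma decomp (f : Y -> R) y : is_dual f -> positive_fun L f ->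
  exists g h : Y -> R,
    [/\ is_dual g /\ positive_fun L g, is_dual h /\ positive_fun L h,
        (forall z, le 0 z -> g z <= f z), (forall z, le 0 z -> h z <= f z)
      & f (lab y) <= `|g y| + `|h y| ].
Proof.
move=> hd hp; have hl := dual_lin hd.
have [M [M0 hM]] := dual_bound hd.
pose rho u := f (lpos u).
have hrho : subl rho.
  split.
    move=> u v; rewrite /rho -linfD //; apply: posf_mono => //; exact: lpos_add.
  move=> a u a0; rewrite /rho -linfZ //; apply: posf_mono => //; exact: lpos_scale.
have mk : forall w, exists g : Y -> R, [/\ is_dual g /\ positive_fun L g,
     (forall z, le 0 z -> g z <= f z) & rho w <= g w].
  move=> w; have [g [glin [gle gw]]] := hahn w hrho.
  have gN x : g (- x) = - g x by apply: linfN.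
  exists g; split => //; last first.
    by move=> z z0; apply: le_trans (gle z) _; rewrite /rho lpos_id.
  have gub x : g x <= M * `|x|.
    apply: le_trans (gle x) _; rewrite /rho.
    apply: le_trans (ler_norm _) _; apply: le_trans (hM _) _.
    apply: ler_wpM2l => //; exact (norm_lpos x).
  split; last first.
    move=> z z0; have := gle (- z); rewrite /rho lpos_N0 // linf0 // gN; lra.
  split => //; exists M => x; rewrite ler_norml; apply/andP; split; last exact: gub.
  by have := gub (- x); rewrite gN normrN; lra.
have [g [gd gle gy]] := mk y.
have [h [hd' hle hy]] := mk (- y).
exists g, h; split => //.
apply: le_trans (posf_mono hl hp (lab_le_lpos y)) _.
rewrite linfD //; rewrite -/(rho y) -/(rho (- y)).
have : h (- y) = - h y by apply: linfN; case: hd' => -[].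
have := ler_norm (g y); have := ler_norm (- h y); rewrite normrN; lra.
Qed.

End Lat.

Section LP.
Context (R : realType).

Lemma lp_cases (r : \bar R) : (1 <= r)%E -> r = +oo%E \/ exists s, r = s%:E /\ 1 <= s.
Proof.
case: r => [s||] h.
- by right; exists s; split => //; move: h; rewrite lee_fin.
- by left.
- by move: h; rewrite leeNy_eq.
Qed.

Lemma lp_ge0 (r : \bar R) n (a : 'I_n -> R) : (1 <= r)%E -> 0 <= lpnorm r a.
Proof.
move=> /lp_cases [->|[s [-> _]]] /=; last exact: powR_ge0.
by apply: (big_ind (fun x => 0 <= x)) => // x y x0 y0; rewrite le_max x0.
Qed.

Lemma lp_mono (r : \bar R) n (a b : 'I_n -> R) : (1 <= r)%E ->
  (forall i, `|a i| <= `|b i|) -> lpnorm r a <= lpnorm r b.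
Proof.
move=> /lp_cases [->|[s [-> s1]]] h /=.
  apply: (big_ind2 (fun x y => x <= y)) => // x1 x2 y1 y2 h1 h2.
  by rewrite ge_max !le_max h1 h2 orbT.
have hs : 0 <= s^-1 by rewrite invr_ge0; lra.
apply: ge0_ler_powR => //; rewrite ?nnegrE; try (apply: sumr_ge0 => i _; exact: powR_ge0).
apply: ler_sum => i _; apply: ge0_ler_powR => //; lra.
Qed.

Lemma lp_comp (r : \bar R) n (a : 'I_n -> R) j : (1 <= r)%E -> `|a j| <= lpnorm r a.
Proof.
move=> /lp_cases [->|[s [-> s1]]] /=.
  by rewrite (bigD1 j) //= le_max lexx.
have s0 : s != 0 by apply/negP => /eqP s0; lra.
rewrite -{1}(powRr1 (normr_ge0 (a j))) -(mulfV s0) powRrM.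
have hs : 0 <= s^-1 by rewrite invr_ge0; lra.
apply: ge0_ler_powR => //; rewrite ?nnegrE ?powR_ge0; try (apply: sumr_ge0 => i _; exact: powR_ge0).
all: try by [].
rewrite (bigD1 j) //= lerDl sumr_ge0 // => i _; exact: powR_ge0.
Qed.

Lemma lp_scale (r : \bar R) n (a : 'I_n -> R) c : (1 <= r)%E -> 0 <= c ->
  lpnorm r (fun i => c * a i) = c * lpnorm r a.
Proof.
move=> /lp_cases [->|[s [-> s1]]] c0 /=.
  apply: (big_ind2 (fun x y => x = c * y)); first by rewrite mulr0.
    by move=> x1 x2 y1 y2 -> ->; rewrite maxr_pMr.
  by move=> i _; rewrite normrM ger0_norm.
under eq_bigr => i _ do rewrite normrM (ger0_norm c0) powRM //.
have hS : 0 <= \sum_(i < n) `|a i| `^ s by apply: sumr_ge0 => i _; exact: powR_ge0.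
rewrite -mulr_sumr powRM ?powR_ge0 //.
have s0 : s != 0 by apply/negP => /eqP s0; lra.
by rewrite -powRrM mulfV // powRr1.
Qed.

Lemma lp_one n (a : 'I_n -> R) : lpnorm 1%E a = \sum_(i < n) `|a i|.
Proof.
rewrite /= invr1 powRr1; last by apply: sumr_ge0 => i _; exact: powR_ge0.
by apply: eq_bigr => i _; rewrite powRr1.
Qed.

Lemma conj_ge1 (p : \bar R) : (1 <= p)%E -> (1 <= conj_exp p)%E.
Proof.
move=> /lp_cases [->|[s [-> s1]]] //=.
case: eqP => [_|/eqP s1']; first by rewrite leey.
rewrite lee_fin ler_pdivlMr; last by rewrite subr_gt0 lt_neqAle eq_sym s1' s1.
lra.
Qed.

End LP.

Section Sups.
Context (R : realType).

Lemma supl_ub (T : Type) (r : \bar R) n (F : 'I_n -> T -> R) (D : set T) (B : R) y :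
  (1 <= r)%E -> (forall y j, D y -> `|F j y| <= B) -> D y ->
  lpnorm r (fun j => F j y) <= sup [set lpnorm r (fun i => F i y) | y in D].
Proof.
move=> hr hB Dy; apply: ub_le_sup; last by exists y.
exists (lpnorm r (fun _ : 'I_n => B)) => _ [y' Dy' <-].
apply: lp_mono => // j; apply: le_trans (hB _ _ Dy') (ler_norm B).
Qed.

Lemma supl_le (T : Type) (r : \bar R) n (F : 'I_n -> T -> R) (D : set T) (K : R) :
  D !=set0 -> (forall y, D y -> lpnorm r (fun j => F j y) <= K) ->
  sup [set lpnorm r (fun i => F i y) | y in D] <= K.
Proof.
move=> [y0 Dy0] h; apply: ge_sup; first by exists (lpnorm r (fun i => F i y0)); exists y0.
by move=> _ [y Dy <-]; apply: h.
Qed.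

End Sups.

Section Main.
Context (R : realType) (Y : completeNormedModType R) (L : BanachLattice Y).
Local Notation le := (bl_le L).
Local Notation lab := (labs L).

Definition adm n (f : 'I_n -> Y -> R) := forall i, is_dual (f i) /\ positive_fun L (f i).

Lemma dual_abs_pos (f : Y -> R) z : linf f -> positive_fun L f -> le 0 z ->
  dual_abs L f z = f z.
Proof.
move=> hl hp z0.
have hz : f z = `|f z| by rewrite ger0_norm //; exact: hp.
apply/le_anti/andP; split.
  apply: ge_sup; first by exists `|f z|; exists z => //=; rewrite (lab_id z0); exact: bl_refl.
  move=> _ [w /= hw <-]; apply: le_trans (posf_abs w hl hp) _; exact: (posf_mono hl hp hw).
apply: ub_le_sup.
  exists (f z) => _ [w /= hw <-]; apply: le_trans (posf_abs w hl hp) _; exact: (posf_mono hl hp hw).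
by exists z => //=; rewrite (lab_id z0); exact: bl_refl.
Qed.

Lemma fam_bound n (f : 'I_n -> Y -> R) : (forall i, is_dual (f i)) ->
  exists B, 0 <= B /\ forall i y, `|f i y| <= B * `|y|.
Proof.
move=> hd.
have [M hM] := choice (fun i => dual_bound (hd i)).
exists (\sum_i M i); split; first by apply: sumr_ge0 => i _; exact: (hM i).1.
move=> i y; apply: le_trans ((hM i).2 y) _; apply: ler_wpM2r => //.
rewrite (bigD1 i) //= lerDl; apply: sumr_ge0 => j _; exact: (hM j).1.
Qed.

Lemma fam_bound1 n (f : 'I_n -> Y -> R) : (forall i, is_dual (f i)) ->
  exists B, forall y j, `|y| <= 1 -> `|f j y| <= B.
Proof.
move=> /fam_bound [B [B0 hB]]; exists B => y j hy.
apply: le_trans (hB j y) _; rewrite -{2}(mulr1 B); exact: ler_wpM2l.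
Qed.

Lemma weak_ub (r : \bar R) n (f : 'I_n -> Y -> R) y : (1 <= r)%E ->
  (forall i, is_dual (f i)) -> `|y| <= 1 ->
  lpnorm r (fun j => f j y) <= weak_norm r f.
Proof.
move=> hr hd hy; have [B hB] := fam_bound1 hd.
exact: (@supl_ub _ _ r n f [set y : Y | `|y| <= 1] B y hr (fun y j h => hB y j h)).
Qed.

Lemma weak_le (r : \bar R) n (f : 'I_n -> Y -> R) K :
  (forall y : Y, `|y| <= 1 -> lpnorm r (fun j => f j y) <= K) -> weak_norm r f <= K.
Proof.
move=> h; apply: supl_le => //; exists 0 => /=; by rewrite normr0.
Qed.

Lemma weak_ge0 (r : \bar R) n (f : 'I_n -> Y -> R) : (1 <= r)%E ->
  (forall i, is_dual (f i)) -> 0 <= weak_norm r f.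
Proof.
move=> hr hd; apply: le_trans (lp_ge0 _ hr) (weak_ub hr hd (_ : `|0 : Y| <= 1)).
by rewrite normr0.
Qed.

Lemma norm_unit (y : Y) : y != 0 -> `| `|y|^-1 *: y| = 1.
Proof.
move=> y0; rewrite normrZ ger0_norm ?invr_ge0 // mulVf //.
by rewrite normr_eq0.
Qed.

Lemma weak_pt (r : \bar R) n (f : 'I_n -> Y -> R) i y : (1 <= r)%E ->
  (forall i, is_dual (f i)) -> `|f i y| <= weak_norm r f * `|y|.
Proof.
move=> hr hd; have hl := dual_lin (hd i).
have [->|y0] := eqVneq y 0; first by rewrite linf0 // !normr0 mulr0.
have hy : y = `|y| *: (`|y|^-1 *: y) by rewrite scalerA mulfV ?scale1r // normr_eq0.
rewrite [in X in X <= _]hy linfZ // normrM normr_id mulrC.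
apply: ler_wpM2r => //.
apply: le_trans (lp_comp (fun j => f j (`|y|^-1 *: y)) i hr) _.
apply: weak_ub => //; by rewrite norm_unit.
Qed.

Lemma aw_ub (r : \bar R) n (f : 'I_n -> Y -> R) y : (1 <= r)%E -> adm f ->
  `|y| <= 1 -> le 0 y -> lpnorm r (fun j => f j y) <= absweak_norm L r f.
Proof.
move=> hr hf hy y0.
have [B hB] := fam_bound1 (fun i => (hf i).1).
have E : forall z, le 0 z -> (fun j => dual_abs L (f j) z) = (fun j => f j z).
  move=> z z0; apply/funext => j; apply: dual_abs_pos => //.
    exact: dual_lin (hf j).1.
  exact: (hf j).2.
rewrite -(E y y0).
apply: (@supl_ub _ _ r n (fun j => dual_abs L (f j))
          [set y : Y | `|y| <= 1 /\ le 0 y] B y hr) => //.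
by move=> z j [hz z0]; rewrite (dual_abs_pos (dual_lin (hf j).1) (hf j).2 z0); exact: hB.
Qed.

Lemma aw_le (r : \bar R) n (f : 'I_n -> Y -> R) K : adm f ->
  (forall y : Y, `|y| <= 1 -> le 0 y -> lpnorm r (fun j => f j y) <= K) ->
  absweak_norm L r f <= K.
Proof.
move=> hf h; apply: supl_le; first by exists 0; split; [rewrite normr0 | exact: bl_refl].
move=> z [hz z0].
have -> : (fun j => dual_abs L (f j) z) = (fun j => f j z).
  apply/funext => j; apply: dual_abs_pos => //; [exact: dual_lin (hf j).1 | exact: (hf j).2].
exact: h.
Qed.

Lemma aw_ge0 (r : \bar R) n (f : 'I_n -> Y -> R) : (1 <= r)%E -> adm f ->
  0 <= absweak_norm L r f.
Proof.
move=> hr hf; apply: le_trans (lp_ge0 (fun j => f j 0) hr) _.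
apply: aw_ub => //; [by rewrite normr0 | exact: bl_refl].
Qed.

Lemma aw_pt (r : \bar R) n (f : 'I_n -> Y -> R) i z : (1 <= r)%E -> adm f ->
  le 0 z -> f i z <= absweak_norm L r f * `|z|.
Proof.
move=> hr hf z0; have hl := dual_lin (hf i).1.
have [->|zn0] := eqVneq z 0; first by rewrite linf0 // !normr0 mulr0.
have hz : z = `|z| *: (`|z|^-1 *: z) by rewrite scalerA mulfV ?scale1r // normr_eq0.
rewrite [in X in X <= _]hz linfZ // mulrC.
apply: ler_wpM2r => //.
have z'0 : le 0 (`|z|^-1 *: z) by apply: le_scale0 => //; rewrite invr_ge0.
apply: le_trans (ler_norm _) _.
apply: le_trans (lp_comp (fun j => f j (`|z|^-1 *: z)) i hr) _.
apply: aw_ub => //; by rewrite norm_unit.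
Qed.

End Main.

Unset Implicit Arguments. Set Strict Implicit.

Theorem lemma3p1 (R : realType) (E : completeNormedModType R)
  (Y : completeNormedModType R) (L : BanachLattice Y) (p q : \bar R)
  (hq1 : (1 <= q)%E) (hqp : (q <= p)%E) (T : E -> Y)
  (hT : is_bounded_op T) :
  pos_strongly_summing L p q T <->
  exists C : R, 0 < C /\
    forall (n : nat) (x : 'I_n -> E),
      lpi_norm L p (fun i => T (x i)) <= C * lpnorm q (fun i => `|x i|).
Proof.
have hp1 : (1 <= p)%E := le_trans hq1 hqp.
have hr : (1 <= conj_exp p)%E := conj_ge1 hp1.
split.
- move=> [C [C0 HC]].
  have [pe|pn] := eqVneq p 1%E.
    have qe : q = 1%E by apply/le_anti/andP; split => //; rewrite -pe.
    case: hT => _ [M hM].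
    exists (`|M| + 1); split; first by rewrite ltr_pwDr // normr_ge0.
    move=> n x; rewrite /lpi_norm pe eqxx qe lp_one mulr_sumr.
    apply: ler_sum => i _; rewrite normr_id.
    apply: le_trans (hM _) _; apply: ler_wpM2r => //.
    apply: le_trans (ler_norm M) _; lra.
  exists (C + C); split; first by rewrite addr_gt0.
  move=> n x; rewrite /lpi_norm (negbTE pn).
  have lq0 : 0 <= lpnorm q (fun i => `|x i|) := lp_ge0 _ hq1.
  set S := [set _ | _ in _].
  case: (pselect (exists v, S v)) => [Sne|S0]; last first.
    have -> : S = set0.
      by apply/seteqP; split => v // Sv; exfalso; apply: S0; exists v.
    by rewrite sup0 mulr_ge0 // addr_ge0 // ltW.
  apply: ge_sup => // _ [f [hf hfw] <-].
  have hgh : forall i, exists gh : (Y -> R) * (Y -> R),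
    [/\ is_dual gh.1 /\ positive_fun L gh.1, is_dual gh.2 /\ positive_fun L gh.2,
        (forall z, bl_le L 0 z -> gh.1 z <= f i z),
        (forall z, bl_le L 0 z -> gh.2 z <= f i z)
      & f i (labs L (T (x i))) <= `|gh.1 (T (x i))| + `|gh.2 (T (x i))| ].
    move=> i; have [hd hpos] := hf i.
    have [g [h [? ? ? ? ?]]] := decomp (T (x i)) hd hpos.
    by exists (g, h); split.
  have [gh hgh'] := choice hgh.
  pose G i := (gh i).1; pose H i := (gh i).2.
  have hG : forall i, is_dual (G i) /\ positive_fun L (G i).
    by move=> i; have [] := hgh' i.
  have hH : forall i, is_dual (H i) /\ positive_fun L (H i).
    by move=> i; have [] := hgh' i.
  have wle (K : 'I_n -> Y -> R) : (forall i, is_dual (K i) /\ positive_fun L (K i)) ->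
      (forall i z, bl_le L 0 z -> K i z <= f i z) -> weak_norm (conj_exp p) K <= 1.
    move=> hK hKf; apply: weak_le => y hy.
    apply: le_trans (hfw) ; apply: le_trans _ (aw_ub hr hf _ (lab_ge0 L y)); last first.
      by rewrite norm_lab.
    apply: lp_mono => // j.
    have hKl := dual_lin (hK j).1.
    apply: le_trans (posf_abs y hKl (hK j).2) _.
    have hfj := hf j.
    rewrite ger0_norm; last by apply: hfj.2; exact: lab_ge0.
    by apply: hKf; exact: lab_ge0.
  have e1 := HC n x G hG.
  have e2 := HC n x H hH.
  have w1 := wle G hG (fun i => (let: And5 _ _ a _ _ := hgh' i in a)).
  have w2 := wle H hH (fun i => (let: And5 _ _ _ a _ := hgh' i in a)).
  apply: le_trans (_ : \sum_i (`|G i (T (x i))| + `|H i (T (x i))|) <= _).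
    by apply: ler_sum => i _; have [] := hgh' i.
  rewrite big_split /=.
  have c0 : 0 <= C * lpnorm q (fun i => `|x i|) by rewrite mulr_ge0 // ltW.
  have := ler_wpM2l c0 w1; have := ler_wpM2l c0 w2; rewrite mulr1.
  move: e1 e2; set a := \sum_(i < n) _; set b := \sum_(i < n) _.
  set c := C * _; move=> e1 e2 e3 e4.
  rewrite mulrDl; exact: (lerD (le_trans e1 e4) (le_trans e2 e3)).
- move=> [C [C0 HC]]; exists C; split => // n x f hf.
  have lq0 : 0 <= lpnorm q (fun i => `|x i|) := lp_ge0 _ hq1.
  have wd : forall i, is_dual (f i) by move=> i; exact: (hf i).1.
  have w0 := weak_ge0 hr wd.
  have HCn := HC n x.
  have [pe|pn] := eqVneq p 1%E.
    subst p; move: HCn; rewrite /lpi_norm eqxx => HCn.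
    apply: le_trans (_ : \sum_(i < n) weak_norm (conj_exp 1%E) f * `|T (x i)| <= _).
      by apply: ler_sum => i _; exact: weak_pt.
    rewrite -mulr_sumr mulrC.
    by apply: ler_wpM2r.
  move: HCn; rewrite /lpi_norm (negbTE pn) => HCn.
  set a := absweak_norm L (conj_exp p) f.
  have a0 : 0 <= a := aw_ge0 hr hf.
  have habs : \sum_(i < n) `|f i (T (x i))| <= \sum_(i < n) f i (labs L (T (x i))).
    apply: ler_sum => i _; apply: posf_abs; [exact: dual_lin (hf i).1 | exact: (hf i).2].
  apply: le_trans habs _.
  have aw : a <= weak_norm (conj_exp p) f.
    apply: aw_le => // y hy y0; exact: weak_ub.
  have [a00|apos] := eqVneq a 0.
    apply: le_trans (_ : \sum_(i < n) a * `|labs L (T (x i))| <= _).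
      apply: ler_sum => i _; apply: aw_pt => //; exact: lab_ge0.
    rewrite a00 big1; last by move=> i _; rewrite mul0r.
    exact (mulr_ge0 (mulr_ge0 (ltW C0) lq0) w0).
  have ap : 0 < a by rewrite lt_neqAle eq_sym apos a0.
  pose f' i y := a^-1 * f i y.
  have hf' : forall i, is_dual (f' i) /\ positive_fun L (f' i).
    move=> i; have [[hl [M hM]] hp] := hf i; split; last first.
      move=> y y0; rewrite /f' mulr_ge0 ?invr_ge0 //; exact: hp.
    split.
      by move=> b u v; rewrite /f' hl mulrDr mulrCA.
    exists (a^-1 * M) => u; rewrite /f' normrM ger0_norm ?invr_ge0 // -mulrA.
    by apply: ler_wpM2l; rewrite ?invr_ge0.
  have hf'w : absweak_norm L (conj_exp p) f' <= 1.
    apply: aw_le => // y hy y0.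
    rewrite /f' lp_scale // ?invr_ge0 //.
    rewrite ler_pdivrMl // mulr1.
    exact: aw_ub.
  have Sub : has_ubound [set \sum_(i < n) f0 i (labs L (T (x i))) | f0 in
       [set f0 : 'I_n -> Y -> R | (forall i, is_dual (f0 i) /\ positive_fun L (f0 i)) /\
          absweak_norm L (conj_exp p) f0 <= 1]].
    exists (\sum_(i < n) `|T (x i)|) => _ [f0 [hf0 hf0w] <-].
    apply: ler_sum => i _.
    apply: le_trans (aw_pt i hr hf0 (lab_ge0 L (T (x i)))) _.
    rewrite norm_lab -{2}(mul1r `|T (x i)|); exact: ler_wpM2r.
  have hmem := ub_le_sup Sub.
  have e1 : \sum_(i < n) f' i (labs L (T (x i))) <= C * lpnorm q (fun i => `|x i|).
    apply: le_trans HCn; apply: hmem; exists f' => //.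
  have e2 : \sum_(i < n) f i (labs L (T (x i))) = a * \sum_(i < n) f' i (labs L (T (x i))).
    rewrite mulr_sumr; apply: eq_bigr => i _; rewrite /f' mulrA mulfV ?mul1r //.
  rewrite e2.
  apply: le_trans (ler_wpM2l a0 e1) _.
  rewrite mulrC; apply: ler_wpM2l; [by rewrite mulr_ge0 // ltW | exact: aw].
Qed.
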